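(* Let $f(\bm\theta)=g_i(\theta_i;\bar{\bm\theta}_i)-h_i(\theta_i;\bar{\bm\theta}_i)$ for each block $i$, with $g_i(\cdot;\bar{\bm\theta}_i)$ convex and differentiable and $h_i(\cdot;\bar{\bm\theta}_i)$ convex in $\theta_i$. Let $\rho>0$, let $\bm\theta^k$ be any point, $i_k$ a block, $u^k_{i_k}\in\partial_{i_k}h_{i_k}(\theta^k_{i_k};\bar{\bm\theta}^k_{i_k})$, and let $\bm\theta^{k+1}$ agree with $\bm\theta^k$ outside block $i_k$ and have $\theta^{k+1}_{i_k}\in\arg\min_{\theta_{i_k}\in\mathcal X_{i_k}}g_{i_k}(\theta_{i_k};\bar{\bm\theta}^k_{i_k})-\langle u^k_{i_k},\theta_{i_k}\rangle+\frac\rho2\|\theta^k_{i_k}-\theta_{i_k}\|^2$. Then $\bm\theta^{k+1}\in\mathcal B\big(\bm\theta^k,\frac2\rho\|\nabla g_{i_k}(\theta^k_{i_k};\bar{\bm\theta}^k_{i_k})-u^k_{i_k}\|\big)$, i.e. $\|\bm\theta^{k+1}-\bm\theta^k\|\le\frac2\rho\|\nabla g_{i_k}(\theta^k_{i_k};\bar{\bm\theta}^k_{i_k})-u^k_{i_k}\|$.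
   Context: $\theta_i$ is the $i$th block of $\bm\theta\in\mathcal X=\mathcal X_1\times\cdots\times\mathcal X_n$ and $\bar{\bm\theta}_i$ is $\bm\theta$ with its $i$th block set to zero; $\nabla g_{i}$ denotes the gradient with respect to block $i$ and $\partial_i$ the convex subdifferential with respect to block $i$; $\mathcal B(c,r)$ is the closed ball of radius $r$ centred at $c$. *)

(* Defs.v *)
From HB Require Import structures.
From mathcomp Require Import all_boot all_order all_algebra.
From mathcomp Require Import all_classical all_reals all_analysis.
Set Implicit Arguments. Unset Strict Implicit. Unset Printing Implicit Defensive.
Import Order.TTheory GRing.Theory Num.Theory.
Import numFieldNormedType.Exports.
Local Open Scope ring_scope.

Definition dotv (R : realType) (m : nat) (u v : 'rV[R]_m) : R :=
  \sum_(j < m) u 0 j * v 0 j.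
Definition enorm (R : realType) (m : nat) (u : 'rV[R]_m) : R :=
  Num.sqrt (dotv u u).

Definition bspace (R : realType) (n : nat) (d : 'I_n -> nat) : Type :=
  forall i : 'I_n, 'rV[R]_(d i).

Definition bnorm (R : realType) (n : nat) (d : 'I_n -> nat) (x : bspace R d) : R :=
  Num.sqrt (\sum_(i < n) dotv (x i) (x i)).

Definition bsub (R : realType) (n : nat) (d : 'I_n -> nat) (x y : bspace R d)
  : bspace R d := fun j => x j - y j.

(* \bar theta_i : theta with its i-th block set to zero *)
Definition zero_block (R : realType) (n : nat) (d : 'I_n -> nat) (i : 'I_n)
  (x : bspace R d) : bspace R d := fun j => if j == i then 0 else x j.

Definition convex_fun (R : realType) (m : nat) (f : 'rV[R]_m -> R) : Prop :=
  forall (x y : 'rV[R]_m) (t : R), 0 <= t -> t <= 1 ->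
    f (t *: x + (1 - t) *: y) <= t * f x + (1 - t) * f y.

Definition is_subgrad (R : realType) (m : nat) (f : 'rV[R]_m -> R) (x u : 'rV[R]_m)
  : Prop := forall y, f x + dotv u (y - x) <= f y.

Definition grad (R : realType) (m : nat) (f : 'rV[R]_m -> R) (x : 'rV[R]_m)
  : 'rV[R]_m := \row_(j < m) ('D_(delta_mx 0 j) f x).

(* Main.v *)
Require Import Defs.
From HB Require Import structures.
From mathcomp Require Import all_boot all_order all_algebra.
From mathcomp Require Import all_classical all_reals all_analysis.
From mathcomp Require Import ring lra.
Import Order.TTheory GRing.Theory Num.Theory.
Import numFieldNormedType.Exports.
Local Open Scope ring_scope.
Local Open Scope classical_set_scope.

Lemma dotv_grad (R : realType) m (F : 'rV[R]_m -> R) x v :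
  differentiable F x -> dotv (grad F x) v = 'D_v F x.
Proof.
move=> dF; rewrite deriveE // {2}(row_sum_delta v) linear_sum /dotv.
apply: eq_bigr => j _; rewrite mxE deriveE // linearZ /= mulrC.
by [].
Qed.

Lemma D_le (R : realType) m (F : 'rV[R]_m -> R) x v :
  convex_fun F -> differentiable F x -> 'D_v F x <= F (x + v) - F x.
Proof.
move=> cF dF.
have dv : derivable F x v by exact: diff_derivable.
set q := (fun h : R => h^-1 *: ((F \o shift x) (h *: v) - F x)).
have cq : q @ 0^'+ --> 'D_v F x.
  move: dv; rewrite /derivable => cvfx.
  rewrite /derive -/q.
  move=> A /cvfx /nbhs_ballP [_ /posnumP[e] xe_A].
  by exists e%:num => //= y xe_y; rewrite lt_def => /andP [xney _]; apply: xe_A.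
apply: (cvgr_to_le cq).
near=> h.
have h0 : 0 < h by near: h; exact: nbhs_right_gt.
have h1 : h < 1 by near: h; exact: nbhs_right_lt.
rewrite /q /= -[X in X <= _]/(h^-1 * (F (h *: v + x) - F x)).
rewrite ler_pdivrMl //.
have := cF (x + v) x h (ltW h0) (ltW h1).
have -> : h *: (x + v) + (1 - h) *: x = h *: v + x.
  by rewrite scalerDr scalerBl scale1r [LHS]addrC addrA subrK addrC.
move=> H; rewrite mulrBr; rewrite mulrBl mul1r in H; lra.
Unshelve. all: by end_near.
Qed.

Section Dot.
Variables (R : realType) (m : nat).
Implicit Types a b c : 'rV[R]_m.
Lemma dotvC a b : dotv a b = dotv b a.
Proof. by apply: eq_bigr => j _; rewrite mulrC. Qed.
Lemma dotvDl a b c : dotv (a + b) c = dotv a c + dotv b c.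
Proof. by rewrite /dotv -big_split; apply: eq_bigr => j _; rewrite mxE mulrDl. Qed.
Lemma dotvNl a b : dotv (- a) b = - dotv a b.
Proof. by rewrite /dotv -sumrN; apply: eq_bigr => j _; rewrite mxE mulNr. Qed.
Lemma dotvZl k a b : dotv (k *: a) b = k * dotv a b.
Proof. by rewrite /dotv mulr_sumr; apply: eq_bigr => j _; rewrite mxE mulrA. Qed.
Lemma dotvBl a b c : dotv (a - b) c = dotv a c - dotv b c.
Proof. by rewrite dotvDl dotvNl. Qed.
Lemma dotvBr a b c : dotv c (a - b) = dotv c a - dotv c b.
Proof. by rewrite dotvC dotvBl !(dotvC c). Qed.
Lemma dotvDr a b c : dotv c (a + b) = dotv c a + dotv c b.
Proof. by rewrite dotvC dotvDl !(dotvC c). Qed.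
Lemma dotvZr k a b : dotv b (k *: a) = k * dotv b a.
Proof. by rewrite dotvC dotvZl dotvC. Qed.
Lemma dotv_ge0 a : 0 <= dotv a a.
Proof. by apply: sumr_ge0 => j _; rewrite -expr2 sqr_ge0. Qed.
Lemma dotv0 a : dotv a 0 = 0.
Proof. by rewrite /dotv big1 // => j _; rewrite mxE mulr0. Qed.
Lemma dotv_exp a b k : dotv (a + k *: b) (a + k *: b) = dotv a a + 2 * k * dotv a b + k ^+ 2 * dotv b b.
Proof. rewrite dotvDl !dotvDr !dotvZl !dotvZr (dotvC b a); ring. Qed.
Lemma enorm_sqr a : enorm a ^+ 2 = dotv a a.
Proof. by rewrite /enorm sqr_sqrtr // dotv_ge0. Qed.
End Dot.

Lemma grad_ineq (R : realType) m (F : 'rV[R]_m -> R) x y :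
  convex_fun F -> differentiable F x -> F x + dotv (grad F x) (y - x) <= F y.
Proof.
move=> cF dF; rewrite dotv_grad //.
have := @D_le _ _ F x (y - x) cF dF.
rewrite [x + _]addrC subrK; lra.
Qed.

Theorem lemmaA3 (R : realType) (n : nat) (d : 'I_n -> nat)
  (f : bspace R d -> R)
  (g h : forall i : 'I_n, 'rV[R]_(d i) -> bspace R d -> R)
  (hf : forall (i : 'I_n) (th : bspace R d),
      f th = g i (th i) (zero_block i th) - h i (th i) (zero_block i th))
  (hgcvx : forall (i : 'I_n) (thb : bspace R d), convex_fun (g i ^~ thb))
  (hgdiff : forall (i : 'I_n) (thb : bspace R d) (x : 'rV[R]_(d i)),
      differentiable (g i ^~ thb) x)
  (hhcvx : forall (i : 'I_n) (thb : bspace R d), convex_fun (h i ^~ thb))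
  (rho : R) (hrho : 0 < rho)
  (thk thk1 : bspace R d) (ik : 'I_n) (u : 'rV[R]_(d ik))
  (hu : is_subgrad (h ik ^~ (zero_block ik thk)) (thk ik) u)
  (hagree : forall j : 'I_n, j != ik -> thk1 j = thk j)
  (hmin : forall y : 'rV[R]_(d ik),
      g ik (thk1 ik) (zero_block ik thk) - dotv u (thk1 ik)
        + rho / 2 * (enorm (thk ik - thk1 ik)) ^+ 2
      <= g ik y (zero_block ik thk) - dotv u y
        + rho / 2 * (enorm (thk ik - y)) ^+ 2) :
  bnorm (bsub thk1 thk)
    <= 2 / rho * enorm (grad (g ik ^~ (zero_block ik thk)) (thk ik) - u).
Proof.
set G := g ik ^~ (zero_block ik thk).
set x := thk ik; set x1 := thk1 ik.
set w := x1 - x.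
set D := grad G x - u.
have hb : bnorm (bsub thk1 thk) = enorm w.
  rewrite /bnorm /enorm (bigD1 ik) //= big1 ?addr0 // => j hj.
  by rewrite /bsub hagree // subrr dotv0.
rewrite hb.
have H1 := hmin x.
rewrite -/x -/x1 in H1.
have E0 : enorm (x - x) = 0 by rewrite subrr /enorm dotv0 sqrtr0.
rewrite E0 expr0n /= mulr0 addr0 in H1.
have H2 := @grad_ineq _ _ G x x1 (hgcvx ik (zero_block ik thk)) (hgdiff ik (zero_block ik thk) x).
rewrite -/G -/x -/w in H2.
have HP : enorm (x - x1) ^+ 2 = dotv w w.
  by rewrite enorm_sqr /w -opprB dotvNl dotvC dotvNl opprK.
rewrite HP in H1.
set c := rho / 2.
have c0 : 0 < c by rewrite /c divr_gt0.
set P := dotv w w; set Q := dotv D D.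
have hDw : dotv D w = dotv (grad G x) w - (dotv u x1 - dotv u x).
  by rewrite /D dotvBl /w !dotvBr.
have key : dotv D w + c * P <= 0.
  have H1b : G x1 - dotv u x1 + c * P <= G x - dotv u x := H1. rewrite hDw; lra.
have exp : dotv (D + c *: w) (D + c *: w) = Q + 2 * c * dotv D w + c ^+ 2 * P.
  exact: dotv_exp.
have Q1 : c ^+ 2 * P <= Q.
  have := @dotv_ge0 _ _ (D + c *: w); rewrite exp => H.
  have : 0 <= c * (- (dotv D w + c * P)) by apply: mulr_ge0; [exact: ltW | lra].
  nra.
have P0 : 0 <= P by exact: dotv_ge0.
have tp : 0 <= 2 / rho by rewrite divr_ge0 // ltW.
rewrite /enorm -/P -/Q -(ger0_norm tp) -sqrtr_sqr -sqrtrM ?exprn_ge0 //.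
apply: ler_wsqrtr.
have -> : P = (2 / rho) ^+ 2 * (c ^+ 2 * P).
  rewrite mulrA -exprMn /c.
  have -> : 2 / rho * (rho / 2) = 1 by field; rewrite ?lt0r_neq0 // ?gt_eqF.
  by rewrite expr1n mul1r.
by rewrite ler_wpM2l // exprn_ge0.
Qed.
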